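(* Let $H\in(1/2,1)$ and let $B^H$ be a fractional Brownian motion on $[0,1]$ with Hurst index $H$. Fix $\alpha\in(1/2,H)$, $\delta\in(0,H-\alpha)$ and $\rho>0$, and define $$N=\sup\Bigl\{n\ge1:\ \|B^H_n-B^H_{n-1}\|_\infty\ge \rho\cdot 2^{-(H-\delta)n}\Bigr\}.$$ Then for every $n>N$, $$\|B^H-B^H_n\|_\alpha\le \frac{\rho\, 2^{2-\alpha}\cdot 2^{-(H-\alpha-\delta)(n+1)}}{1-2^{-(H-\alpha-\delta)}}.$$
   Context: A fractional Brownian motion with Hurst index $H$ is a centered Gaussian process with $B^H(0)=0$ and covariance $\mathbb{E}[B^H(s)B^H(t)]=\tfrac12(|s|^{2H}+|t|^{2H}-|s-t|^{2H})$, taken with continuous sample paths. For $n\ge0$, $B^H_n$ is the function on $[0,1]$ obtained by linear interpolation of the values of $B^H$ at the dyadic points $i/2^n$, $i=0,\dots,2^n$; $B^H_{-1}\equiv0$. $\|u\|_\infty=\sup_{t\in[0,1]}|u(t)|$ and $\|u\|_\alpha=\sup_{0\le s<t\le1}|u(s)-u(t)|/|s-t|^\alpha$. *)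

(* Defs.v *)
From HB Require Import structures.
From mathcomp Require Import all_boot all_order all_algebra.
From mathcomp Require Import all_classical all_reals all_analysis.
Set Implicit Arguments. Unset Strict Implicit. Unset Printing Implicit Defensive.
Import Order.TTheory GRing.Theory Num.Theory.
Import numFieldNormedType.Exports.
Local Open Scope classical_set_scope.
Local Open Scope ring_scope.

Section defs.
Variable R : realType.

Definition fbm_cov (H s t : R) : R :=
  (`|s| `^ (2 * H) + `|t| `^ (2 * H) - `|s - t| `^ (2 * H)) / 2.

(* B is a fractional Brownian motion with Hurst index H on [0,1] (index set
   [0,1]) defined on the probability space (T, P): each B t is a random
   variable, B 0 = 0, every sample path is continuous on [0,1], and B is a
   centered Gaussian process with covariance fbm_cov H, i.e. every finite
   linear combination sum_i c_i B(t_i) has law N(0, sum_{i,j} c_i c_j K(t_i,t_j))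
   (the degenerate normal law N(0,0) being the Dirac mass at 0). *)
Definition is_fBM (d : measure_display) (T : measurableType d)
    (P : probability T R) (H : R) (B : R -> T -> R) : Prop :=
  [/\ (forall t, 0 <= t <= 1 -> measurable_fun setT (B t)),
      (forall w, B 0 w = 0),
      (forall w, {within `[0, 1], continuous (fun t => B t w)}) &
      (forall (k : nat) (ts : 'I_k -> R) (c : 'I_k -> R),
        (forall i, 0 <= ts i <= 1) ->
        let X := fun w => \sum_(i < k) c i * B (ts i) w in
        let v := \sum_(i < k) \sum_(j < k) c i * c j * fbm_cov H (ts i) (ts j) in
        forall A : set R, measurable A ->
          P (X @^-1` A) =
          (if v == 0 then (\1_A (0 : R))%:E
           else normal_prob 0 (Num.sqrt v) A))].

(* B_n: linear interpolation of f at the dyadic points i/2^n of [0,1]. *)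
Definition dyadic_interp (f : R -> R) (n : nat) (t : R) : R :=
  let k : R := (Num.floor (t * 2 ^+ n))%:~R in
  f (k / 2 ^+ n) + (t * 2 ^+ n - k) * (f ((k + 1) / 2 ^+ n) - f (k / 2 ^+ n)).

Definition supnorm (u : R -> R) : \bar R :=
  ereal_sup [set x | exists t, 0 <= t <= 1 /\ x = (`|u t|)%:E].

Definition holder_norm (alpha : R) (u : R -> R) : \bar R :=
  ereal_sup [set x | exists s t, [/\ 0 <= s, s < t, t <= 1 &
     x = (`|u s - u t| / `|s - t| `^ alpha)%:E]].

End defs.

(* Main.v *)
Require Import Defs.
From HB Require Import structures.
From mathcomp Require Import all_boot all_order all_algebra.
From mathcomp Require Import all_classical all_reals all_analysis.
From mathcomp Require Import ring lra zify.
Import Order.TTheory GRing.Theory Num.Theory.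
Import numFieldNormedType.Exports.
Local Open Scope classical_set_scope.
Local Open Scope ring_scope.



Lemma interp_cell (R : realType) (f : R -> R) (n : nat) (k : int) (t : R) :
  k%:~R / 2 ^+ n <= t <= (k%:~R + 1) / 2 ^+ n ->
  dyadic_interp f n t = f (k%:~R / 2 ^+ n) + (t * 2 ^+ n - k%:~R) *
     (f ((k%:~R + 1) / 2 ^+ n) - f (k%:~R / 2 ^+ n)).
Proof.
move=> /andP[h1 h2]. have E0 : 0 < (2:R) ^+ n by exact: exprn_gt0.
rewrite /dyadic_interp.
have h1' : k%:~R <= t * 2^+n by rewrite -ler_pdivrMr.
have h2' : t * 2^+n <= k%:~R + 1 by rewrite -ler_pdivlMr.
case: (ltrP (t*2^+n) (k%:~R+1)) => h3.
  by rewrite (floor_def (m:=k)) // h1' /= intrD.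
have ht : t * 2^+n = k%:~R + 1 by apply/le_anti; rewrite h2' h3.
rewrite (floor_def (m:=k+1)); last by rewrite !intrD ht lexx /= ltrDl.
have -> : t = (k%:~R + 1) / 2^+n by rewrite -ht mulfK // gt_eqF.
rewrite divfK ?gt_eqF // intrD; ring.
Qed.



Lemma cell_affine (R : realType) (f : R -> R) (p : nat) (k : int) :
  exists a b : R, forall t, k%:~R / 2 ^+ p.+1 <= t <= (k%:~R + 1) / 2 ^+ p.+1 ->
    dyadic_interp f p.+1 t - dyadic_interp f p t = a + b * t.
Proof.
have E0 : 0 < (2:R) ^+ p by exact: exprn_gt0.
set j := Num.floor (k%:~R / 2 : R).
have /andP[j1 j2] := floor_itv (k%:~R / 2 : R).
rewrite -/j in j1 j2.
have k1 : (2 * j <= k)%R.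
  rewrite -(ler_int R) intrM /=. rewrite -ler_pdivlMl //. 
  by rewrite mulrC.
have k2 : (k + 1 <= 2 * j + 2)%R.
  have : (k < 2 * j + 2)%R.
    rewrite -(ltr_int R) intrD intrM /=. rewrite intrD in j2.
    move: j2; rewrite ltr_pdivrMr // => h. lra.
  lia.
have k1R : 2 * j%:~R <= k%:~R :> R by move: k1; rewrite -(ler_int R) intrM.
have k2R : k%:~R + 1 <= 2 * j%:~R + 2 :> R.
  by move: k2; rewrite -(ler_int R) !intrD intrM.
have q1 : j%:~R / 2^+p <= k%:~R / 2^+p.+1 :> R.
  by rewrite exprS invfM mulrA ler_pM2r ?invr_gt0.
have q2 : (k%:~R+1)/2^+p.+1 <= (j%:~R+1)/2^+p :> R.
  rewrite exprS invfM mulrA ler_pM2r ?invr_gt0 //.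
  rewrite ler_pdivrMr //; lra.
exists (f (k%:~R / 2 ^+ p.+1) - k%:~R * (f ((k%:~R + 1) / 2 ^+ p.+1) - f (k%:~R / 2 ^+ p.+1))
        - (f (j%:~R / 2 ^+ p) - j%:~R * (f ((j%:~R + 1) / 2 ^+ p) - f (j%:~R / 2 ^+ p)))).
exists (2 ^+ p.+1 * (f ((k%:~R + 1) / 2 ^+ p.+1) - f (k%:~R / 2 ^+ p.+1))
        - 2 ^+ p * (f ((j%:~R + 1) / 2 ^+ p) - f (j%:~R / 2 ^+ p))).
move=> t ht.
rewrite (interp_cell _ _ _ _ _ ht) (interp_cell _ f p j t); first ring.
case/andP: ht => h1 h2; apply/andP; split; lra.
Qed.



Lemma cell_lip (R : realType) (g : R -> R) (E c : R) (k : int) :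
  0 < E -> (forall t, 0 <= t <= 1 -> `|g t| <= c) ->
  (exists a b : R, forall t, k%:~R / E <= t <= (k%:~R+1)/E -> g t = a + b * t) ->
  0 <= k%:~R :> R -> k%:~R + 1 <= E ->
  forall u v, k%:~R / E <= u <= (k%:~R+1)/E -> k%:~R / E <= v <= (k%:~R+1)/E ->
  `|g u - g v| <= 2 * c * E * `|u - v|.
Proof.
move=> E0 hc [a [b hab]] k0 kE u v hu hv.
have hl : k%:~R / E <= k%:~R / E <= (k%:~R+1)/E.
  by rewrite lexx /= ler_pM2r ?invr_gt0 // lerDl.
have hr : k%:~R / E <= (k%:~R+1)/E <= (k%:~R+1)/E.
  by rewrite lexx andbT ler_pM2r ?invr_gt0 // lerDl.
have l01 : 0 <= k%:~R / E <= 1.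
  apply/andP; split; first by rewrite divr_ge0 // ltW.
  by rewrite ler_pdivrMr // mul1r; lra.
have r01 : 0 <= (k%:~R+1) / E <= 1.
  apply/andP; split; first by rewrite divr_ge0 ?ltW //; lra.
  by rewrite ler_pdivrMr // mul1r; lra.
have hb : `|b| <= 2 * c * E.
  have e1 : g ((k%:~R+1)/E) - g (k%:~R / E) = b / E.
    rewrite !hab //. rewrite mulrDl. field. by rewrite gt_eqF.
  have : `|b / E| <= 2 * c.
    rewrite -e1; apply: le_trans (ler_normB _ _) _.
    by have := hc _ r01; have := hc _ l01; lra.
  by rewrite normrM (gtr0_norm (x := E^-1)) ?invr_gt0 // ler_pdivrMr.
rewrite !hab // (_ : a + b * u - (a + b * v) = b * (u - v)); last by ring.
by rewrite normrM ler_wpM2r.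
Qed.



Lemma int_step (R : realType) (k : int) (N : nat) (x : R) :
  k%:~R < x -> x <= N%:R -> k%:~R + 1 <= N%:R :> R.
Proof.
move=> h1 h2.
have h : (k < N%:Z)%R by rewrite -(ltr_int R); apply: lt_le_trans h2.
have : (k + 1 <= N%:Z)%R by lia.
by rewrite -(ler_int R) intrD.
Qed.

Lemma holder_cell (R : realType) (g : R -> R) (N : nat) (c alpha : R) :
  (0 < N)%N -> 0 <= alpha <= 1 ->
  (forall t, 0 <= t <= 1 -> `|g t| <= c) ->
  (forall k : int, exists a b : R, forall t,
      k%:~R / N%:R <= t <= (k%:~R+1)/N%:R -> g t = a + b * t) ->
  forall s t, 0 <= s -> s < t -> t <= 1 ->
  `|g s - g t| <= 2 * c * (N%:R * (t - s)) `^ alpha.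
Proof.
move=> N0 /andP[a0 a1] hc haff s t s0 st t1.
have E0 : 0 < N%:R :> R by rewrite ltr0n.
have c0 : 0 <= c by apply: le_trans (hc 0 _); rewrite ?normr_ge0 // lexx ler01.
have hs : 0 <= s <= 1 by rewrite s0 /=; lra.
have ht : 0 <= t <= 1 by rewrite t1 andbT; lra.
set x := N%:R * (t - s).
have x0 : 0 < x by rewrite mulr_gt0 // subr_gt0.
have triv : `|g s - g t| <= 2 * c.
  by apply: le_trans (ler_normB _ _) _; have := hc _ hs; have := hc _ ht; lra.
case: (lerP 1 x) => hx.
  apply: le_trans triv _. rewrite -[X in X <= _]mulr1 ler_wpM2l ?mulr_ge0 //.
  by rewrite -(powRr0 x) ler_powR.
suff main : `|g s - g t| <= 2 * c * x.
  apply: le_trans main _. rewrite ler_wpM2l ?mulr_ge0 //.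
  by rewrite ger1_powR // x0 ltW.
set k := Num.floor (s * N%:R).
have /andP[k1 k2] := floor_itv (s * N%:R).
rewrite -/k intrD in k1 k2.
have k0 : 0 <= k%:~R :> R by rewrite ler0z floor_ge0 mulr_ge0 // ltW.
have sN : s * N%:R < t * N%:R by rewrite ltr_pM2r.
have tN : t * N%:R <= N%:R by rewrite -[X in _ <= X]mul1r ler_pM2r.
have kN : k%:~R + 1 <= N%:R :> R.
  by apply: (int_step _ _ _ (t * N%:R)) => //; apply: le_lt_trans k1 sN.
have sk : k%:~R / N%:R <= s <= (k%:~R + 1) / N%:R.
  by rewrite ler_pdivrMr // k1 /= ler_pdivlMr // ltW.
have Hlip := fun k => cell_lip _ g _ c k E0 hc.
case: (lerP (t * N%:R) (k%:~R + 1)) => htk.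
  have tk : k%:~R / N%:R <= t <= (k%:~R + 1) / N%:R.
    by rewrite ler_pdivrMr // ler_pdivlMr // htk andbT; lra.
  apply: le_trans (Hlip k (haff k) k0 kN s t sk tk) _.
  rewrite distrC gtr0_norm ?subr_gt0 // /x; lra.
have kN2 : (k + 1)%:~R + 1 <= N%:R :> R.
  by apply: (int_step _ _ _ (t * N%:R)) => //; rewrite intrD.
pose p : R := (k%:~R + 1) / N%:R.
have pk : k%:~R / N%:R <= p <= (k%:~R + 1) / N%:R.
  by rewrite lexx andbT ler_pM2r ?invr_gt0 //; lra.
have k10 : 0 <= (k + 1)%:~R :> R by rewrite intrD; lra.
have pk' : (k + 1)%:~R / N%:R <= p <= ((k + 1)%:~R + 1) / N%:R.
  by rewrite intrD lexx /= ler_pM2r ?invr_gt0 //; lra.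
have tk' : (k + 1)%:~R / N%:R <= t <= ((k + 1)%:~R + 1) / N%:R.
  have ex : t * N%:R - s * N%:R = x by rewrite /x; ring.
  rewrite intrD ler_pdivrMr // ler_pdivlMr //; apply/andP; split; lra.
have ps : s <= p by case/andP: sk.
have pt : p <= t by rewrite /p ler_pdivrMr //; lra.
have h1 := Hlip k (haff k) k0 kN s p sk pk.
have h2 := Hlip (k + 1) (haff (k + 1)) k10 kN2 p t pk' tk'.
rewrite (_ : g s - g t = (g s - g p) + (g p - g t)); last by ring.
apply: le_trans (ler_normD _ _) _.
have e1 : `|s - p| = p - s by rewrite distrC ger0_norm // subr_ge0.
have e2 : `|p - t| = t - p by rewrite distrC ger0_norm // subr_ge0.
rewrite e1 in h1; rewrite e2 in h2.
rewrite /x.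
have -> : 2 * c * (N%:R * (t - s)) = 2 * c * N%:R * (p - s) + 2 * c * N%:R * (t - p) by ring.
exact: lerD h1 h2.
Qed.



Lemma cont_eps (R : realType) (f : R -> R) (A : set R) x :
  {within A, continuous f} -> A x -> forall e : R, 0 < e ->
  exists2 d : R, 0 < d & forall z, A z -> `|x - z| < d -> `|f x - f z| < e.
Proof.
move=> /subspace_continuousP fc Ax e e0.
move/cvgr_dist_lt: (fc x Ax) => /(_ e e0).
rewrite /prop_near1 /within /= => /nbhs_ballP [d d0 hd].
exists d => // z Az xz; apply: hd => //.
Qed.

Lemma interp_cvg (R : realType) (f : R -> R) x :
  {within `[0, 1], continuous f} -> 0 <= x <= 1 -> forall e : R, 0 < e ->
  exists M0, forall M, (M0 <= M)%N -> `|dyadic_interp f M x - f x| <= e.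
Proof.
move=> fc x01 e e0.
have Ax : `[0, 1]%classic x by rewrite /= in_itv /=.
have [d d0 hd] := cont_eps _ _ _ _ fc Ax _ e0.
exists (Num.trunc d^-1).+1 => M hM.
have E0 : 0 < (2:R) ^+ M by exact: exprn_gt0.
have dE : 1 < d * 2 ^+ M.
  have h1 := truncnS_gt d^-1.
  have h2 : (Num.trunc d^-1).+1%:R <= (2:R) ^+ M.
    rewrite -natrX ler_nat; apply: leq_trans hM _; exact: ltnW (ltn_expl _ _).
  by rewrite -ltr_pdivrMl // mulr1; apply: lt_le_trans h1 h2.
case/andP: x01 => x0 x1.
rewrite /dyadic_interp.
set k := Num.floor (x * 2 ^+ M).
have /andP[k1 k2] := floor_itv (x * 2 ^+ M).
rewrite -/k intrD in k1 k2.
set l := x * 2 ^+ M - k%:~R.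
have l0 : 0 <= l by rewrite subr_ge0.
have l1 : l < 1 by rewrite /l; lra.
have k0 : 0 <= k%:~R :> R by rewrite ler0z floor_ge0 mulr_ge0 // ltW.
have ha : `|f x - f (k%:~R / 2 ^+ M)| < e.
  apply: hd.
    rewrite /= in_itv /=; apply/andP; split; first by rewrite divr_ge0 // ltW.
    rewrite ler_pdivrMr // mul1r.
    by apply: le_trans k1 _; rewrite -[X in _ <= X]mul1r ler_pM2r.
  rewrite ger0_norm; last by rewrite subr_ge0 ler_pdivrMr.
  have -> : x - k%:~R / 2 ^+ M = l / 2 ^+ M by rewrite /l; field; rewrite gt_eqF.
  rewrite ltr_pdivrMr //; exact: le_lt_trans (ltW l1) dE.
have -> : f (k%:~R / 2 ^+ M) + l * (f ((k%:~R + 1) / 2 ^+ M) - f (k%:~R / 2 ^+ M)) - f x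
   = (1 - l) * (f (k%:~R / 2 ^+ M) - f x) + l * (f ((k%:~R + 1) / 2 ^+ M) - f x) by ring.
have [->|lp] := eqVneq l 0.
  by rewrite subr0 mul1r mul0r addr0 distrC ltW.
have lp' : 0 < l by rewrite lt_def lp l0.
have kx : k%:~R < x * 2 ^+ M by rewrite /l subr_gt0 in lp'.
have kN : k%:~R + 1 <= ((2 ^ M)%N)%:R :> R.
  apply: (int_step _ _ _ (x * 2 ^+ M)) => //.
  by rewrite natrX -[X in _ <= X]mul1r ler_pM2r.
rewrite natrX in kN.
have hb : `|f x - f ((k%:~R + 1) / 2 ^+ M)| < e.
  apply: hd.
    rewrite /= in_itv /=; apply/andP; split; first by rewrite divr_ge0 ?ltW //; lra.
    by rewrite ler_pdivrMr // mul1r.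
  rewrite distrC ger0_norm; last by rewrite subr_ge0 ler_pdivlMr // ltW.
  have -> : (k%:~R + 1) / 2 ^+ M - x = (1 - l) / 2 ^+ M by rewrite /l; field; rewrite gt_eqF.
  rewrite ltr_pdivrMr //; apply: le_lt_trans _ dE; lra.
apply: le_trans (ler_normD _ _) _.
rewrite !normrM (ger0_norm l0) ger0_norm ?subr_ge0 ?ltW //.
rewrite (distrC (f _)) (distrC (f _) (f x)).
have -> : e = (1 - l) * e + l * e by ring.
apply: ler_ltD; first by apply: ler_wpM2l; [lra | exact: ltW].
by rewrite ltr_pM2l.
Qed.



Lemma geom_bound (R : realType) (q : R) (n M : nat) : 0 <= q -> q < 1 -> (n <= M)%N ->
  \sum_(n <= i < M) q ^+ i.+1 <= q ^+ n.+1 / (1 - q).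
Proof.
move=> q0 q1 nM.
have q1' : 0 < 1 - q by rewrite subr_gt0.
rewrite ler_pdivlMr // mulrC mulr_sumr.
have -> : \sum_(n <= i < M) (1 - q) * q ^+ i.+1 =
          \sum_(n <= i < M) ((fun j => - q ^+ j.+1) i.+1 - (fun j => - q ^+ j.+1) i).
  by apply: eq_bigr => i _; rewrite /= !exprS; ring.
rewrite telescope_sumr //=.
by have := exprn_ge0 M.+1 q0; lra.
Qed.

Lemma pow_combine (R : realType) (H delta alpha : R) (m : nat) :
  2 `^ (- (H - delta) * m%:R) * ((2:R) ^+ m) `^ alpha = (2 `^ (- (H - alpha - delta))) ^+ m.
Proof.
have e1 : (2:R) ^+ m = 2 `^ m%:R by rewrite powR_mulrn.
have e2 : (2 `^ (- (H - alpha - delta))) ^+ m = 2 `^ (- (H - alpha - delta)) `^ m%:R.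
  by rewrite powR_mulrn // powR_ge0.
rewrite e1 e2 -!powRrM -powRD.
  by congr (_ `^ _); ring.
by apply/implyP => _; rewrite pnatr_eq0.
Qed.
Lemma q_lt1 (R : realType) (r : R) : 0 < r -> 2 `^ (- r) < 1.
Proof.
move=> r0; rewrite /powR (_ : (2:R) == 0 = false); last by rewrite pnatr_eq0.
rewrite expR_lt1.
by rewrite mulNr oppr_lt0 mulr_gt0 // ln_gt0 // ltr1n.
Qed.



Theorem theorem4 (R : realType) (d : measure_display) (T : measurableType d)
  (P : probability T R) (H : R) (B : R -> T -> R) (alpha delta rho : R) :
  1 / 2 < H < 1 ->
  is_fBM P H B ->
  1 / 2 < alpha < H ->
  0 < delta < H - alpha ->
  0 < rho ->
  forall (w : T) (n : nat),
    (forall m : nat, (1 <= m)%N ->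
       ((rho * 2 `^ (- (H - delta) * m%:R))%:E <=
          supnorm (fun t => (dyadic_interp (B ^~ w) m t
                            - dyadic_interp (B ^~ w) m.-1 t)%R))%E ->
       (m < n)%N) ->
    (holder_norm alpha (fun t => (B t w - dyadic_interp (B ^~ w) n t)%R) <=
      (rho * 2 `^ (2 - alpha) * 2 `^ (- (H - alpha - delta) * n.+1%:R)
        / (1 - 2 `^ (- (H - alpha - delta))))%:E)%E.
Proof.
move=> /andP[H1 H2] [_ _ Bc _] /andP[a1 a2] /andP[d0 d1] r0 w n hN.
have fc := Bc w.
set f := B ^~ w in fc hN *.
set q := 2 `^ (- (H - alpha - delta)).
have r0' : 0 < H - alpha - delta by lra.
have q0 : 0 <= q := powR_ge0 _ _.
have q1 : q < 1 := q_lt1 _ _ r0'.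
have al01 : 0 <= alpha <= 1 by apply/andP; split; lra.
have gbound : forall m, (n < m)%N -> forall t, 0 <= t <= 1 ->
   `|dyadic_interp f m t - dyadic_interp f m.-1 t| <= rho * 2 `^ (- (H - delta) * m%:R).
  move=> m nm t t01.
  have m1 : (1 <= m)%N by apply: leq_ltn_trans (leq0n n) nm.
  have nle : ~ ((rho * 2 `^ (- (H - delta) * m%:R))%:E <=
      supnorm (fun t => (dyadic_interp f m t - dyadic_interp f m.-1 t)%R))%E.
    by move=> /(hN m m1) h; rewrite ltnNge (ltnW nm) in h.
  have ub : (`|dyadic_interp f m t - dyadic_interp f m.-1 t|%:E <=
      supnorm (fun t => (dyadic_interp f m t - dyadic_interp f m.-1 t)%R))%E.
    by apply: ereal_sup_ubound; exists t.
  move/negP: nle; rewrite -ltNge => lt.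
  by rewrite -lee_fin; apply/ltW/(le_lt_trans ub lt).
have gholder : forall m, (n < m)%N -> forall s t, 0 <= s -> s < t -> t <= 1 ->
   `|(dyadic_interp f m s - dyadic_interp f m.-1 s) -
     (dyadic_interp f m t - dyadic_interp f m.-1 t)| <= 2 * rho * q ^+ m * (t - s) `^ alpha.
  move=> [|p] nm s t s0 st t1; first by [].
  have haff : forall k : int, exists a b : R, forall t,
      k%:~R / (2 ^ p.+1)%N%:R <= t <= (k%:~R + 1) / (2 ^ p.+1)%N%:R ->
      dyadic_interp f p.+1 t - dyadic_interp f p t = a + b * t.
    by move=> k; rewrite natrX; exact: cell_affine.
  have := holder_cell _ (fun t => dyadic_interp f p.+1 t - dyadic_interp f p t)
    (2 ^ p.+1)%N (rho * 2 `^ (- (H - delta) * p.+1%:R)) alpha (expn_gt0 _ _) al01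
    (gbound _ nm) haff s t s0 st t1.
  move=> h; apply: le_trans h _.
  rewrite powRM ?ler0n ?subr_ge0 ?(ltW st) // natrX.
  rewrite /q -(pow_combine _ H delta alpha p.+1).
  by rewrite le_eqVlt; apply/orP; left; apply/eqP; ring.
have tele : forall M x, (n <= M)%N -> dyadic_interp f M x - dyadic_interp f n x =
    \sum_(n <= i < M) (dyadic_interp f i.+1 x - dyadic_interp f i.+1.-1 x).
  by move=> M x nM; symmetry; exact: (telescope_sumr (fun i => dyadic_interp f i x) nM).
have main : forall s t, 0 <= s -> s < t -> t <= 1 ->
  `|(f s - dyadic_interp f n s) - (f t - dyadic_interp f n t)|
     <= 2 * rho * q ^+ n.+1 / (1 - q) * (t - s) `^ alpha.
  move=> s t s0 st t1.
  have s01 : 0 <= s <= 1 by apply/andP; split; lra.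
  have t01 : 0 <= t <= 1 by apply/andP; split; lra.
  apply/ler_addgt0Pr => e e0.
  have e2 : 0 < e / 2 by rewrite divr_gt0.
  have [M1 hM1] := interp_cvg _ f s fc s01 _ e2.
  have [M2 hM2] := interp_cvg _ f t fc t01 _ e2.
  pose M := maxn n (maxn M1 M2).
  have nM : (n <= M)%N by rewrite /M leq_maxl.
  have m1 : (M1 <= M)%N by rewrite /M !leq_max leqnn !orbT.
  have m2 : (M2 <= M)%N by rewrite /M !leq_max leqnn !orbT.
  have hs := hM1 M m1.
  have ht := hM2 M m2.
  rewrite (_ : (f s - dyadic_interp f n s) - (f t - dyadic_interp f n t) =
     (f s - dyadic_interp f M s) - (f t - dyadic_interp f M t) +
     ((dyadic_interp f M s - dyadic_interp f n s) - (dyadic_interp f M t - dyadic_interp f n t)));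
    last by ring.
  rewrite !tele // -sumrB.
  have hsum : `|\sum_(n <= i < M)
      ((dyadic_interp f i.+1 s - dyadic_interp f i.+1.-1 s) -
       (dyadic_interp f i.+1 t - dyadic_interp f i.+1.-1 t))|
      <= 2 * rho * q ^+ n.+1 / (1 - q) * (t - s) `^ alpha.
    apply: le_trans (ler_norm_sum _ _ _) _.
    apply: (@le_trans _ _ (\sum_(n <= i < M) (2 * rho * (t - s) `^ alpha) * q ^+ i.+1)).
      apply: ler_sum_nat => i /andP[ni _].
      apply: le_trans (gholder i.+1 ni s t s0 st t1) _.
      by rewrite le_eqVlt; apply/orP; left; apply/eqP; ring.
    rewrite -mulr_sumr.
    have c0 : 0 <= 2 * rho * (t - s) `^ alpha by rewrite !mulr_ge0 ?powR_ge0 // ltW.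
    apply: le_trans (ler_wpM2l c0 (geom_bound _ _ _ _ q0 q1 nM)) _.
    by rewrite le_eqVlt; apply/orP; left; apply/eqP; ring.
  apply: le_trans (ler_normD _ _) _.
  have hab := ler_normB (f s - dyadic_interp f M s) (f t - dyadic_interp f M t).
  rewrite distrC in hs; rewrite distrC in ht.
  move: hsum hab hs ht.
  set X := 2 * rho * q ^+ n.+1 / (1 - q) * (t - s) `^ alpha.
  move=> *; lra.
apply/ereal_supP => y [s [t [s0 st t1 ->]]].
have est : `|s - t| = t - s by rewrite distrC gtr0_norm // subr_gt0.
rewrite lee_fin est.
have tp : 0 < (t - s) `^ alpha by apply: powR_gt0; rewrite subr_gt0.
rewrite ler_pdivrMr //.
apply: le_trans (main s t s0 st t1) _.
rewrite ler_wpM2r ?(ltW tp) //.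
have eq : 2 `^ (- (H - alpha - delta) * n.+1%:R) = q ^+ n.+1.
  by rewrite powRrM powR_mulrn.
rewrite eq ler_wpM2r ?invr_ge0 ?subr_ge0 ?(ltW q1) //.
have two : 2 <= 2 `^ (2 - alpha) :> R.
  rewrite -{1}(powRr1 (ler0n R 2)); apply: ler_powR; rewrite ?ler1n //; lra.
by rewrite ler_wpM2r ?exprn_ge0 // mulrC ler_wpM2l // (ltW r0).
Qed.
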